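(* Let $Q_{n,m}$ be as defined in the context and let $S$ be a nonzero subspace of $V(Q_{n,m})$. Then every coloring of the induced subgraph $Q_{n,m}|_S$ contains a code of dimension at most $\left\lceil (\dim(S^\perp)+1)/m\right\rceil$, where $S^\perp$ is the orthogonal complement of $S$ in $V(Q_{n,m})$.
   Context: A quantum graph $G$ consists of a finite-dimensional complex inner product space $V(G)$ and a real vector space $E(G)$ of self-adjoint operators on $V(G)$ containing the identity $I$; write $|G|=\dim V(G)$ and $\|G\|=\dim E(G)-1$. A code of $G$ is a subspace $C\subseteq V(G)$ such that there is a function $\epsilon_C:E(G)\to\mathbb{R}$ with $P_CAP_C=\epsilon_C(A)P_C$ for all $A\in E(G)$, where $P_C$ is the orthogonal projection onto $C$. A coloring of $G$ is a set $K$ of codes of $G$ with $\sum_{C\in K}P_C=I$. For a subspace $S\subseteq V(G)$, the induced subgraph $G|_S$ is the quantum graph with $V(G|_S)=S$ and $E(G|_S)=P_SE(G)P_S$ (operators restricted to $S$). Let $n\ge 2$ and $1\le m\le n-1$ be integers. $Q_{n,m}$ denotes any quantum graph with $|Q_{n,m}|=n$, $\|Q_{n,m}\|=m$, such that: (i) $E(Q_{n,m})$ is commutative; (ii) (tropical) $E(Q_{n,m})$ has a basis $\{I,A_1,\dots,A_m\}$ and there is an orthonormal basis of $V(Q_{n,m})$ of common eigenvectors of the $A_i$ such that, writing the eigenvalues of $A_i$ in decreasing order $\lambda_{i,1},\dots,\lambda_{i,n}$ with corresponding common eigenvectors $w_{i,1},\dots,w_{i,n}$, one has $0<\lambda_{i,j+1}<\lambda_{i,j}/n^2$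 for all $i$ and $1\le j<n$; (iii) (cyclical) for $1\le i<m$ and all $j$, $w_{i+1,j}=w_{i,j+s_i}$, with the second index taken modulo $n$ in $\{1,\dots,n\}$, where $s_i=\lfloor n/m\rfloor+1$ if $1\le i\le (n\bmod m)$ and $s_i=\lfloor n/m\rfloor$ otherwise; (iv) the common eigenvectors are enumerated as $w_1,\dots,w_n$ (each common eigenvector exactly once) so that for every $l\in\{1,\dots,n\}$ one has $w_l=w_{i,\lceil l/m\rceil}$ for some $i\in\{1,\dots,m\}$. *)

(* Defs.v *)
(* Quantum graphs realised inside C^n (row vectors,
   operators act on the right: v |-> v *m X), over an arbitrary
   numClosedFieldType C (e.g. the complex numbers). *)
From HB Require Import structures.
From mathcomp Require Import all_boot all_order all_algebra.
From mathcomp Require Import sesquilinear spectral.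
Set Implicit Arguments. Unset Strict Implicit. Unset Printing Implicit Defensive.
Import Order.TTheory GRing.Theory Num.Theory.
Local Open Scope ring_scope.

Definition adj (C : numClosedFieldType) p q (X : 'M[C]_(p, q)) : 'M[C]_(q, p) :=
  map_mx Num.conj (X^T).

Section QG.
Variables (C : numClosedFieldType) (n : nat).
Definition selfadj (X : 'M[C]_n) : Prop := adj X = X.

Definition oproj (U : 'M[C]_n) : 'M[C]_n := proj_ortho U.

Definition ocompl (S : 'M[C]_n) : 'M[C]_n :=
  orthomx Num.conj (mx_of_hermitian (hermitian1mx _)) S.

(* A quantum graph is represented by a subspace V of C^n (its vertex space)
   and a set E of operators; operators on V are represented by operators on
   C^n vanishing on V^perp, and the identity of V by oproj V. *)

Definition is_code (V : 'M[C]_n) (E : 'M[C]_n -> Prop) (Cs : 'M[C]_n) : Prop :=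
  (Cs <= V)%MS /\
  forall X, E X -> exists e : C, e \is Num.real /\
     oproj Cs *m X *m oproj Cs = e *: oproj Cs.

Definition is_coloring (V : 'M[C]_n) (E : 'M[C]_n -> Prop) (K : seq 'M[C]_n) : Prop :=
  (forall Cs, Cs \in K -> is_code V E Cs) /\
  \sum_(Cs <- K) oproj Cs = oproj V.

Definition induced_E (S : 'M[C]_n) (E : 'M[C]_n -> Prop) : 'M[C]_n -> Prop :=
  fun Y => exists X, E X /\ Y = oproj S *m X *m oproj S.

Definition rspan m (A : 'I_m -> 'M[C]_n) : 'M[C]_n -> Prop :=
  fun X => exists (c0 : C) (c : 'I_m -> C),
    c0 \is Num.real /\ (forall i, c i \is Num.real) /\
    X = c0%:M + \sum_(i < m) c i *: A i.

Definition rindep m (A : 'I_m -> 'M[C]_n) : Prop :=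
  forall (c0 : C) (c : 'I_m -> C),
    c0 \is Num.real -> (forall i, c i \is Num.real) ->
    c0%:M + \sum_(i < m) c i *: A i = 0 -> c0 = 0 /\ forall i, c i = 0.
End QG.

(* the shift s_i for 0-based index i (paper's index i+1) *)
Definition shift (n m i : nat) : nat :=
  (if i < n %% m then n %/ m + 1 else n %/ m)%N.

Definition ceildiv (a b : nat) : nat := ((a + b.-1) %/ b)%N.

(* Main.v *)
Set Warnings "-notation-overridden -ambiguous-paths".
Require Import Defs.
From HB Require Import structures.
From mathcomp Require Import all_boot all_order all_algebra.
From mathcomp Require Import sesquilinear spectral.
From mathcomp Require Import zify ring.
Import Order.TTheory GRing.Theory Num.Theory.
Local Open Scope ring_scope.
Local Open Scope sesquilinear_scope.
Set Implicit Arguments. Unset Strict Implicit.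
Section Aux.
Variables (C : numClosedFieldType) (n : nat).
Local Notation "''[' u , v ]" := (@dotmx C n u v) : ring_scope.
Local Notation "''[' u ]" := (@dotmx C n u u) : ring_scope.
Local Notation ocp := (orthomx Num.conj (mx_of_hermitian (hermitian1mx _))).

Lemma tmul p q r (X : 'M[C]_(p, q)) (Y : 'M[C]_(q, r)) : (X *m Y)^t* = Y^t* *m X^t*.
Proof. by rewrite trmx_mul map_mxM. Qed.

Lemma dotm (u v : 'rV[C]_n) : u *m v^t* = ('[u, v])%:M.
Proof. by rewrite dotmxE -mx11_scalar. Qed.

Lemma dotC (u v : 'rV[C]_n) : '[u, v] = ('[v, u])^*.
Proof. by rewrite hermC /= mul1r. Qed.

Lemma proj_sub (U : 'M[C]_n) : (oproj U <= U)%MS.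
Proof. by rewrite -[oproj U]mul1mx proj_ortho_sub. Qed.

Lemma projSA (U : 'M[C]_n) : (oproj U)^t* = oproj U.
Proof.
set P := oproj U.
have h1 : (1%:M - P <= ocp U)%MS.
  by have := @proj_ortho_compl_sub C n n n U 1%:M; rewrite mul1mx.
have h2 : (P <= ocp (1%:M - P))%MS.
  apply: submx_trans (proj_sub U) _.
  by rewrite orthomx_sym.
have /orthomx1P h3 := h2.
have e : P = P *m P^t*.
  have e1 : (1%:M - P)^t* = 1%:M - P^t*.
    by rewrite linearB /= map_mxB trmx1 map_mx1.
  by apply/eqP; rewrite -subr_eq0 -{1}[P]mulmx1 -mulmxBr -e1 h3.
by rewrite e tmul trmxCK.
Qed.

Lemma projP (U : 'M[C]_n) : oproj U *m oproj U = oproj U.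
Proof. exact: proj_ortho_proj. Qed.

Lemma proj_id (U : 'M[C]_n) p (X : 'M[C]_(p, n)) : (X <= U)%MS -> X *m oproj U = X.
Proof. exact: proj_ortho_id. Qed.

Lemma dot_proj (U : 'M[C]_n) (x y : 'rV[C]_n) :
  '[x *m oproj U, y] = '[x, y *m oproj U].
Proof. by rewrite !dotmxE tmul projSA mulmxA. Qed.

Lemma dot_projn (U : 'M[C]_n) (x : 'rV[C]_n) :
  '[x *m oproj U, x] = '[x *m oproj U].
Proof. by rewrite dot_proj -{1}(projP U) mulmxA dot_proj -mulmxA projP. Qed.

Variable (w : 'I_n -> 'rV[C]_n).
Hypothesis hw : forall k l : 'I_n, w k *m adj (w l) = (k == l)%:R%:M :> 'M[C]_1.

Lemma dotw k l : '[w k, w l] = (k == l)%:R.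
Proof. by rewrite dotmxE; have := hw k l; rewrite /adj => ->; rewrite mxE eqxx mulr1n. Qed.

Let W : 'M[C]_n := \matrix_(l < n) w l.

Lemma WW : W^t* *m W = 1%:M.
Proof.
have hu : W \is unitarymx.
  apply/unitarymxP; apply/matrixP=> k l.
  have := dotw k l; rewrite dotmxE !mxE => <-.
  by apply: eq_bigr => a _; rewrite !mxE.
by rewrite -(invmx_unitary hu) mulVmx // unitarymx_unit.
Qed.

Lemma expand (x : 'rV[C]_n) : x = \sum_l '[x, w l] *: w l.
Proof.
rewrite -{1}[x]mulmx1 -WW mulmxA mulmx_sum_row; apply: eq_bigr => l _.
rewrite rowK; congr (_ *: _); rewrite dotmxE !mxE; apply: eq_bigr => a _.
by rewrite !mxE.
Qed.

Lemma dot_suml I (r : seq I) (P : pred I) (c : I -> C) (v : I -> 'rV[C]_n) y :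
  '[\sum_(j <- r | P j) c j *: v j, y] = \sum_(j <- r | P j) c j * '[v j, y].
Proof.
rewrite dotmxE mulmx_suml summxE; apply: eq_bigr => j _.
by rewrite -scalemxAl mxE dotmxE.
Qed.

Lemma expandf {f : 'I_n -> 'I_n} (hf : injective f) x :
  x = \sum_j '[x, w (f j)] *: w (f j).
Proof. by rewrite {1}(expand x) (reindex_inj hf). Qed.

Lemma qform {f : 'I_n -> 'I_n} (hf : injective f) {M : 'M[C]_n} {b : 'I_n -> C}
  (hM : forall j, w (f j) *m M = b j *: w (f j)) x y :
  '[x *m M, y] = \sum_j '[x, w (f j)] * b j * '[w (f j), y].
Proof.
rewrite {1}(expandf hf x) mulmx_suml.
under eq_bigr do rewrite -scalemxAl hM scalerA.
by rewrite dot_suml.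
Qed.

Lemma pars {f : 'I_n -> 'I_n} (hf : injective f) {M : 'M[C]_n} {b : 'I_n -> C}
  (hM : forall j, w (f j) *m M = b j *: w (f j)) x :
  '[x *m M, x] = \sum_j b j * (`|'[x, w (f j)]| ^+ 2).
Proof.
rewrite (qform hf hM); apply: eq_bigr => j _.
by rewrite normCK (dotC (w (f j))) mulrAC mulrC.
Qed.

Lemma pars1 {f : 'I_n -> 'I_n} (hf : injective f) x :
  '[x] = \sum_j `|'[x, w (f j)]| ^+ 2.
Proof.
have h1 : forall j, w (f j) *m 1%:M = (fun _ => 1) j *: w (f j).
  by move=> j; rewrite mulmx1 scale1r.
have := pars hf h1 x.
by rewrite mulmx1 => ->; under eq_bigr do rewrite mul1r.
Qed.

Lemma trace_w {f : 'I_n -> 'I_n} (hf : injective f) (M : 'M[C]_n) :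
  \tr M = \sum_j '[w (f j) *m M, w (f j)].
Proof.
transitivity (\sum_l '[w l *m M, w l]); last by rewrite (reindex_inj hf).
rewrite -{1}[M]mulmx1 -WW mulmxA mxtrace_mulC mulmxA.
rewrite /mxtrace; apply: eq_bigr => l _.
rewrite dotmxE !mxE; apply: eq_bigr => b _; rewrite !mxE; congr (_ * _).
by apply: eq_bigr => a _; rewrite !mxE.
Qed.

Lemma proj_norm_le (U : 'M[C]_n) x : '[x *m oproj U] <= '[x].
Proof.
have h0 : '[x *m oproj U, x - x *m oproj U] = 0.
  by rewrite dot_proj mulmxBl -mulmxA projP subrr linear0r.
have -> : '[x] = '[x *m oproj U + (x - x *m oproj U)] by rewrite addrC subrK.
move: h0; set y := x - x *m oproj U; set z := x *m oproj U => h0.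
rewrite dnormD /= h0.
by rewrite conjC0 !addr0 lerDl dnorm_ge0.
Qed.

Lemma CS (u v : 'rV[C]_n) : `|'[u, v]| ^+ 2 <= '[u] * '[v].
Proof. exact: (CauchySchwarz _ u v).1. Qed.

Lemma capnz p q (A : 'M[C]_(p,n)) (B : 'M[C]_(q,n)) :
  (n < \rank A + \rank B)%N ->
  exists x : 'rV[C]_n, [/\ x != 0, (x <= A)%MS & (x <= B)%MS].
Proof.
move=> h; have e := mxrank_sum_cap A B.
have hr : (0 < \rank (A :&: B))%N.
  have := rank_leq_col (A + B)%MS; lia.
have : (A :&: B)%MS != 0 by rewrite -mxrank_eq0 -lt0n.
case/rowV0Pn => x hx nx; exists x; split => //.
  exact: submx_trans hx (capmxSl _ _).
exact: submx_trans hx (capmxSr _ _).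
Qed.

Lemma rows_rank p (g : 'I_p -> 'I_n) (hg : injective g) :
  \rank (\matrix_(k < p) w (g k)) = p.
Proof.
apply/eqP; rewrite eqn_leq rank_leq_row /=.
have e : (\matrix_(k < p) w (g k)) *m (\matrix_(k < p) w (g k))^t* = 1%:M.
  apply/matrixP => k l; have := dotw (g k) (g l).
  rewrite (inj_eq hg) dotmxE !mxE => <-.
  by apply: eq_bigr => a _; rewrite !mxE.
by have := mxrankM_maxl (\matrix_(k < p) w (g k)) ((\matrix_(k < p) w (g k))^t*); rewrite e mxrank1.
Qed.

Lemma rows_orth p (g : 'I_p -> 'I_n) (l : 'I_n) (hl : forall k, g k != l) x :
  (x <= \matrix_(k < p) w (g k))%MS -> '[x, w l] = 0.
Proof.
case/submxP => y ->; rewrite dotmxE -mulmxA.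
have -> : (\matrix_(k < p) w (g k)) *m (w l)^t* = 0.
  apply/matrixP => k a; rewrite (ord1 a) [RHS]mxE.
  have := dotw (g k) l; rewrite (negPf (hl k)) mulr0n dotmxE !mxE => h.
  rewrite -[RHS]h; apply: eq_bigr => b _; rewrite !mxE //.
by rewrite mulmx0 mxE.
Qed.

Lemma dotZl a (x y : 'rV[C]_n) : '[a *: x, y] = a * '[x, y].
Proof. by rewrite !dotmxE -scalemxAl mxE. Qed.

Lemma tr_proj_ge0 (U : 'M[C]_n) : 0 <= \tr (oproj U).
Proof.
rewrite (@trace_w id (@inj_id _)); apply: sumr_ge0 => l _.
by rewrite dot_projn dnorm_ge0.
Qed.

Lemma tr_proj_le (U : 'M[C]_n) : \tr (oproj U) <= n%:R.
Proof.
rewrite (@trace_w id (@inj_id _)).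
have -> : (n%:R : C) = \sum_(l < n) '[w l] by rewrite (eq_bigr (fun _ => 1)) ?sumr_const ?card_ord // => l _; rewrite dotw eqxx.
by apply: ler_sum => l _; rewrite dot_projn proj_norm_le.
Qed.

Lemma assoc5 (x y : 'M[C]_(1, n)) (P Q M : 'M[C]_n) :
  x *m P *m Q *m M *m (Q *m (P *m y^t*)) = x *m (P *m (Q *m M *m Q) *m P) *m y^t*.
Proof. by rewrite !mulmxA. Qed.
End Aux.
Unset Implicit Arguments. Set Strict Implicit.

Theorem lemma6 (C : numClosedFieldType) (n m : nat)
  (hn : (2 <= n)%N) (hm1 : (1 <= m)%N) (hm2 : (m <= n - 1)%N)
  (A : 'I_m -> 'M[C]_n)
  (hsa : forall X, rspan A X -> selfadj X)
  (hcomm : forall X Y, rspan A X -> rspan A Y -> X *m Y = Y *m X)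
  (hind : rindep A)
  (w : 'I_n -> 'rV[C]_n)
  (hw : forall k l : 'I_n, w k *m adj (w l) = (k == l)%:R%:M :> 'M[C]_1)
  (sigma : 'I_m -> 'I_n -> 'I_n) (hsig : forall i, bijective (sigma i))
  (lam : 'I_m -> 'I_n -> C)
  (heig : forall i j, w (sigma i j) *m A i = lam i j *: w (sigma i j))
  (hord : forall i (j j' : 'I_n), nat_of_ord j' = j.+1 ->
      0 < lam i j' /\ lam i j' < lam i j / (n ^ 2)%:R)
  (hcyc : forall (i i' : 'I_m) (j j' : 'I_n), nat_of_ord i' = i.+1 ->
      nat_of_ord j' = ((j + shift n m i) %% n)%N ->
      w (sigma i' j) = w (sigma i j'))
  (henum : forall l : 'I_n, exists (i : 'I_m) (k : 'I_n),
      nat_of_ord k = (l %/ m)%N /\ w l = w (sigma i k))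
  (S : 'M[C]_n) (hS : S != 0)
  (K : seq 'M[C]_n) (hK : is_coloring S (induced_E S (rspan A)) K) :
  exists2 Cs, Cs \in K &
    (\rank Cs <= ceildiv (\rank (ocompl S)).+1 m)%N.
Proof.
set c := \rank (ocompl S).
set d := ceildiv c.+1 m.
have hsigI : forall i, injective (sigma i) := fun i => bij_inj (hsig i).
have hrS : (\rank S + c)%N = n := add_rank_ortho S.
have hS0 : (0 < \rank S)%N by rewrite lt0n mxrank_eq0.
have hcn : (c < n)%N by lia.
case: (boolP (has (fun Cs => \rank Cs <= d)%N K)) => [/hasP [Cs hCs hr] | hno].
  by exists Cs.
exfalso.
have hK' : forall Cs, Cs \in K -> (d < \rank Cs)%N.
  by move=> Cs hCs; rewrite ltnNge; apply: contra hno => h; apply/hasP; exists Cs.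
have hdn : (d < n)%N.
  case: (ltnP d n) => // hnd.
  case: K hK hK' hno => [|Cs K'] hK hK' _.
    have := hK.2; rewrite big_nil => e.
    have := eqmx_rank (introT eqmxP (proj_orthoE S)); rewrite -[proj_ortho S]/(oproj S) -e mxrank0.
    lia.
  have := hK' Cs (mem_head _ _); have := rank_leq_col Cs; lia.
have hd1 : (0 < d)%N by rewrite /d /ceildiv divn_gt0 //; lia.
have hN : (0 : C) < (n ^ 2)%:R by rewrite ltr0n expn_gt0; lia.
have hpos : forall i j, 0 < lam i j.
  move=> i j; case: (posnP j) => hj.
    have h1n : (1 < n)%N by lia.
    have e1 : nat_of_ord (Ordinal h1n) = j.+1 by rewrite /= hj.
    have [h1 h2] := hord i j _ e1.
    have := lt_trans h1 h2; rewrite pmulr_lgt0 // invr_gt0 //.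
  have hj' : (j.-1 < n)%N by have := ltn_ord j; lia.
  have e1 : nat_of_ord j = (Ordinal hj').+1 by rewrite /=; lia.
  have [h1 _] := hord i _ j e1.
  exact: h1.
have hstep : forall i (j j' : 'I_n), nat_of_ord j' = j.+1 -> lam i j' <= lam i j.
  move=> i j j' e; have [h1 h2] := hord i j j' e.
  apply: ltW; apply: (lt_le_trans h2).
  rewrite ler_pdivrMr // ler_peMr ?(ltW (hpos i j)) // ler1n expn_gt0; lia.
have hmono : forall i (j j' : 'I_n), (j <= j')%N -> lam i j' <= lam i j.
  move=> i j j' hjj.
  have : exists k, nat_of_ord j' = (j + k)%N by exists (j' - j)%N; lia.
  case=> k; elim: k j' {hjj} => [|k IH] j' e.
    by have -> : j' = j by apply: val_inj; rewrite /= e addn0.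
  have hk : (j + k < n)%N by have := ltn_ord j'; lia.
  apply: le_trans (IH (Ordinal hk) erefl).
  by apply: hstep => /=; rewrite e addnS.
pose dd : 'I_n := Ordinal hdn.
have hrA : forall i, rspan A (A i).
  move=> i; exists 0, (fun k => (k == i)%:R); split; first exact: rpred0.
  split; first by move=> k; exact: realn.
  rewrite (bigD1 i) //= eqxx scale1r big1 ?addr0; last by move=> k /negPf ->; rewrite scale0r.
  by rewrite raddf0 add0r.
have hcode : forall Cs, Cs \in K -> forall i,
    \tr (oproj Cs *m A i) <= lam i dd * \tr (oproj Cs).
  move=> Cs hCs i; have [hCS hcd] := hK.1 Cs hCs.
  have [e [_ he]] := hcd (oproj S *m A i *m oproj S)
     (ex_intro _ (A i) (conj (hrA i) erefl)).
  have hPCS : oproj Cs *m oproj S = oproj Cs.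
    exact: proj_id (submx_trans (proj_sub Cs) hCS).
  have hPSC : oproj S *m oproj Cs = oproj Cs.
    transitivity ((oproj Cs *m oproj S)^t*); first by rewrite tmul !projSA.
    by rewrite hPCS projSA.
  have he' : oproj Cs *m A i *m oproj Cs = e *: oproj Cs.
    rewrite -he [oproj Cs *m (oproj S *m A i *m oproj S)]mulmxA.
    rewrite [oproj Cs *m (oproj S *m A i)]mulmxA hPCS.
    by rewrite -[oproj Cs *m A i *m oproj S *m oproj Cs]mulmxA hPSC.
  have htr : \tr (oproj Cs *m A i) = e * \tr (oproj Cs).
    by rewrite -{1}projP -[oproj Cs *m oproj Cs *m A i]mulmxA mxtrace_mulC he' mxtraceZ.
  rewrite htr; apply: (ler_wpM2r (tr_proj_ge0 hw Cs)).
  have hgd : forall k : 'I_(n - d), (d + k < n)%N.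
    by move=> k; have := ltn_ord k; lia.
  pose g := fun k : 'I_(n - d) => sigma i (Ordinal (hgd k)).
  have hg : injective g.
    move=> a b /hsigI /(congr1 val) /= h; apply: val_inj => /=; lia.
  have hrk := rows_rank hw hg.
  have := hK' Cs hCs => hdC.
  have [x [nx xC xT]] := capnz (A:=Cs) (B:=\matrix_(k < n - d) w (g k)) (ltac:(lia)).
  have hx0 : forall j : 'I_n, (j < d)%N -> dotmx x (w (sigma i j)) = 0.
    move=> j hj; apply: (rows_orth hw _ xT) => k.
    by apply/eqP => /hsigI /(congr1 val) /=; lia.
  have hq : dotmx (x *m A i) x <= lam i dd * dotmx x x.
    rewrite (pars hw (hsigI i) (heig i)) (pars1 hw (hsigI i)) mulr_sumr.
    apply: ler_sum => j _; case: (ltnP j d) => hj.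
      by rewrite hx0 // normr0 expr2 !mulr0.
    by apply: (ler_wpM2r (exprn_ge0 2 (normr_ge0 _))); exact: hmono.
  have hxC : x *m oproj Cs = x := proj_id xC.
  have hxS : x *m oproj S = x := proj_id (submx_trans xC hCS).
  have hx : x *m oproj Cs *m oproj S = x by rewrite hxC hxS.
  have hxe : dotmx (x *m A i) x = e * dotmx x x.
    rewrite !dotmxE.
    transitivity (((x *m oproj Cs *m oproj S) *m A i *m (x *m oproj Cs *m oproj S)^t*) 0 0).
      by rewrite hx.
    rewrite tmul [(x *m oproj Cs)^t*]tmul !projSA assoc5 he -scalemxAr -!scalemxAl hxC mxE //.
  have hxp : 0 < dotmx x x := dotmx_is_dotmx nx.
  by rewrite -(ler_pM2r hxp) -hxe.
have hd1n : (d.-1 < n)%N by lia.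
pose d1 : 'I_n := Ordinal hd1n.
pose mu i := lam i d1.
have hmu : forall i, 0 < mu i by move=> i; exact: hpos.
have hdd : forall i, (n ^ 2)%:R * lam i dd <= mu i.
  move=> i; have e1 : nat_of_ord dd = d1.+1 by rewrite /= prednK.
  have [_ h] := hord i d1 dd e1.
  by move: h; rewrite ltr_pdivlMr // mulrC => /ltW.
pose Phi := \sum_i (mu i)^-1 * \tr (oproj S *m A i).
have hup : (n ^ 2)%:R * Phi <= m%:R * n%:R.
  have e1 : Phi = \sum_(Cs <- K) \sum_i (mu i)^-1 * \tr (oproj Cs *m A i).
    rewrite /Phi -[oproj S](proj2 hK) exchange_big /=; apply: eq_bigr => i _.
    by rewrite mulmx_suml raddf_sum mulr_sumr.
  have e2 : \tr (oproj S) = \sum_(Cs <- K) \tr (oproj Cs).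
    by rewrite -[oproj S](proj2 hK) raddf_sum.
  apply: (@le_trans _ _ (m%:R * \tr (oproj S))); last first.
    apply: (ler_wpM2l (ler0n _ m)). exact: tr_proj_le hw S.
  rewrite e1 e2 !mulr_sumr !big_seq; apply: ler_sum => Cs hCs.
  have -> : m%:R * \tr (oproj Cs) = \sum_(i < m) \tr (oproj Cs).
    by rewrite sumr_const card_ord mulr_natl.
  rewrite mulr_sumr.
  apply: ler_sum => i _.
  apply: (@le_trans _ _ ((n ^ 2)%:R * ((mu i)^-1 * (lam i dd * \tr (oproj Cs))))).
    apply: ler_wpM2l; first exact: ltW.
    by apply: ler_wpM2l; [rewrite invr_ge0; exact: ltW | exact: hcode].
  have -> : (n ^ 2)%:R * ((mu i)^-1 * (lam i dd * \tr (oproj Cs))) =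
            ((n ^ 2)%:R * lam i dd / mu i) * \tr (oproj Cs) by ring.
  rewrite -{2}[\tr (oproj Cs)]mul1r.
  apply: (ler_wpM2r (tr_proj_ge0 hw Cs)).
  by rewrite ler_pdivrMr // mul1r.
have hcS : (c.+1 <= n)%N by lia.
pose gT := fun k : 'I_c.+1 => widen_ord hcS k.
have hgT : injective gT by move=> a b /(congr1 val) /= /val_inj.
have hrT := rows_rank hw hgT.
have [u [nu uS uT]] := capnz (A:=S) (B:=\matrix_(k < c.+1) w (gT k)) (ltac:(lia)).
have hu0 : forall l : 'I_n, (c < l)%N -> dotmx u (w l) = 0.
  move=> l hl; apply: (rows_orth hw _ uT) => k.
  by apply/eqP => /(congr1 val) /=; have := ltn_ord k; lia.
have huS : u *m oproj S = u := proj_id uS.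
have hup0 : 0 < dotmx u u := dotmx_is_dotmx nu.
have hi : forall i, \sum_j lam i j * `|dotmx u (w (sigma i j))| ^+ 2
                   <= dotmx u u * \tr (oproj S *m A i).
  move=> i; rewrite mxtrace_mulC (trace_w hw (hsigI i)) mulr_sumr.
  apply: ler_sum => j _.
  rewrite [w (sigma i j) *m (A i *m oproj S)]mulmxA heig -scalemxAl dotZl dot_projn.
  rewrite [X in _ <= X]mulrCA; apply: (ler_wpM2l (ltW (hpos i j))).
  by rewrite -{1}huS dot_proj; exact: CS.
have hlow : dotmx u u <= dotmx u u * Phi.
  have e0 := pars1 hw (@inj_id _) u.
  apply: (@le_trans _ _ (\sum_i (mu i)^-1 * \sum_j lam i j * `|dotmx u (w (sigma i j))| ^+ 2)); last first.
    rewrite /Phi mulr_sumr; apply: ler_sum => i _; rewrite mulrCA.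
    by apply: (ler_wpM2l _ (hi i)); rewrite invr_ge0; exact: ltW.
  have Hch : forall l : 'I_n, exists p : 'I_m * 'I_n,
      nat_of_ord p.2 = (l %/ m)%N /\ w l = w (sigma p.1 p.2).
    by move=> l; have [i [k [h1 h2]]] := henum l; exists (i, k).
  have [ik hik] := fin_all_exists Hch.
  have hwinj : injective w.
    move=> a b e; apply/eqP; have := dotw hw a b; rewrite e (dotw hw) eqxx.
    by case: (a == b) => // /eqP; rewrite mulr0n oner_eq0.
  have hsl : forall l, sigma (ik l).1 (ik l).2 = l.
    by move=> l; apply: hwinj; rewrite -(hik l).2.
  have e1 : forall i, (mu i)^-1 * \sum_j lam i j * `|dotmx u (w (sigma i j))| ^+ 2
      = \sum_l (mu i)^-1 * lam i (invF (hsigI i) l) * `|dotmx u (w l)| ^+ 2.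
    move=> i; rewrite [in RHS](reindex_inj (hsigI i)) mulr_sumr; apply: eq_bigr => j _.
    by rewrite invF_f mulrA.
  rewrite (eq_bigr _ (fun i _ => e1 i)) exchange_big /= e0; apply: ler_sum => l _.
  rewrite (bigD1 (ik l).1) //= -[X in X <= _]addr0; apply: lerD; last first.
    apply: sumr_ge0 => i _; apply: mulr_ge0; last exact: exprn_ge0.
    by apply: mulr_ge0; [rewrite invr_ge0; exact: ltW | exact: ltW].
  have -> : invF (hsigI (ik l).1) l = (ik l).2.
    by apply: (@hsigI (ik l).1); rewrite f_invF hsl.
  case: (leqP l c) => hl; last by rewrite hu0 // normr0 expr2 !mulr0.
  apply: ler_peMl; first exact: exprn_ge0.
  rewrite mulrC ler_pdivlMr // mul1r; apply: hmono => /=.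
  rewrite (hik l).1 /d /ceildiv.
  have -> : (c.+1 + m.-1 = c + m)%N by lia.
  rewrite divnDr ?dvdnn // divnn hm1 addn1 /=.
  exact: leq_div2r.
have hmn : (m * n < n ^ 2)%N.
  rewrite (_ : n ^ 2 = n * n)%N; last by rewrite expnS expn1.
  by rewrite ltn_mul2r; apply/andP; split; lia.
have h1 : (n ^ 2)%:R * dotmx u u <= dotmx u u * ((n ^ 2)%:R * Phi).
  rewrite mulrCA; exact: (ler_wpM2l (ltW hN) hlow).
have h2 : dotmx u u * ((n ^ 2)%:R * Phi) <= dotmx u u * (m%:R * n%:R).
  exact: (ler_wpM2l (ltW hup0) hup).
have h3 : dotmx u u * (m%:R * n%:R) < (n ^ 2)%:R * dotmx u u.
  by rewrite [X in _ < X]mulrC ltr_pM2l // -natrM ltr_nat.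
by have := lt_le_trans h3 (le_trans h1 h2); rewrite ltxx.
Qed.
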